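(* Let $\varphi:Q\to Q_C$ be the homomorphism determined by $\varphi(y_i)=A_i$ for $i=1,\dots,m$. Then for every $w\in Q$, $|\varphi(w)|_{Y_C}=C\,|w|_Y$, where $|\cdot|_{Y_C}$ is the word length in $Q_C$ with respect to $Y_C$ and $|\cdot|_Y$ is the word length in $Q$ with respect to $Y$.
   Context: Let $Q$ be a finitely generated recursively presented group with presentation $\langle Y\mid\mathcal{S}\rangle$, where $Y=\{y_1,\dots,y_m\}$ is finite, $\mathcal{S}$ is a recursive set of positive words over $Y$, and the empty word is not in $\mathcal{S}$. Let $C\ge1$ be an integer. For $i=1,\dots,m$ let $Y_{C,i}=\{a_{1,i},\dots,a_{C,i}\}$, $Y_C=\bigcup_iY_{C,i}$ (all letters distinct), $A_i=a_{1,i}\cdots a_{C,i}\in F(Y_C)$. For $r=r(y_1,\dots,y_m)\in\mathcal{S}$ let $r_C=r(A_1,\dots,A_m)$, $\mathcal{S}_C=\{r_C:r\in\mathcal{S}\}$, and $Q_C=\langle Y_C\mid\mathcal{S}_C\rangle$. (The map $\varphi$ is well defined since it sends each relator $r$ to $r_C$.) *)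

(* Defs.v *)
(* Group presentations <X | R> modelled combinatorially:
   elements of the presented group are equivalence classes of words over
   X^{+-1} under the congruence generated by free cancellation and
   insertion/deletion of relators. *)
From mathcomp Require Import all_boot.
Set Implicit Arguments. Unset Strict Implicit. Unset Printing Implicit Defensive.

(* a letter (x, true) is x, (x, false) is x^{-1} *)
Definition letter (T : Type) := (T * bool)%type.
Definition gword (T : Type) := seq (letter T).

Definition inv_letter (T : Type) (a : letter T) : letter T := (a.1, ~~ a.2).
Definition inv_word (T : Type) (w : gword T) : gword T := rev (map (@inv_letter T) w).
Definition pos_word (T : Type) (r : seq T) : gword T := map (fun x => (x, true)) r.

Inductive pres_eq (T : Type) (R : seq T -> Prop) : gword T -> gword T -> Prop :=
| pe_refl w : pres_eq R w w
| pe_sym u v : pres_eq R u v -> pres_eq R v u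
| pe_trans u v w : pres_eq R u v -> pres_eq R v w -> pres_eq R u w
| pe_free u v a : pres_eq R (u ++ [:: a; inv_letter a] ++ v) (u ++ v)
| pe_rel u v r : R r -> pres_eq R (u ++ pos_word r ++ v) (u ++ v).

Definition word_length_is (T : Type) (R : seq T -> Prop) (w : gword T) (n : nat) : Prop :=
  (exists w', pres_eq R w w' /\ size w' = n) /\
  (forall w', pres_eq R w w' -> n <= size w').

(* Y_C = {a_{j,i}} indexed by 'I_C * 'I_m; A_i = a_{1,i} ... a_{C,i} *)
Definition A_word (C m : nat) (i : 'I_m) : seq ('I_C * 'I_m) :=
  [seq (j, i) | j <- enum 'I_C].

Definition relC (C m : nat) (r : seq 'I_m) : seq ('I_C * 'I_m) :=
  flatten (map (@A_word C m) r).

Definition S_C (C m : nat) (S : pred (seq 'I_m)) : seq ('I_C * 'I_m) -> Prop :=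
  fun r' => exists2 r, S r & r' = relC C r.

Definition phi_letter (C m : nat) (a : letter 'I_m) : gword ('I_C * 'I_m) :=
  if a.2 then pos_word (A_word C a.1) else inv_word (pos_word (A_word C a.1)).
Definition phi_word (C m : nat) (w : gword 'I_m) : gword ('I_C * 'I_m) :=
  flatten (map (@phi_letter C m) w).

(* Main.v *)
Require Import Defs.
From mathcomp Require Import all_boot.

Section Aux.

Lemma pe_ctx (T : Type) (R : seq T -> Prop) (u v x y : gword T) :
  pres_eq R u v -> pres_eq R (x ++ u ++ y) (x ++ v ++ y).
Proof.
elim=> {u v}.
- move=> w; exact: pe_refl.
- move=> u v _ H; exact: pe_sym.
- move=> u v w _ H1 _ H2; exact: pe_trans H1 H2.
- move=> u v a.
  have -> : x ++ (u ++ [:: a; inv_letter a] ++ v) ++ y =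
            (x ++ u) ++ [:: a; inv_letter a] ++ (v ++ y) by rewrite !catA.
  have -> : x ++ (u ++ v) ++ y = (x ++ u) ++ (v ++ y) by rewrite !catA.
  exact: pe_free.
- move=> u v r Hr.
  have -> : x ++ (u ++ pos_word r ++ v) ++ y =
            (x ++ u) ++ pos_word r ++ (v ++ y) by rewrite !catA.
  have -> : x ++ (u ++ v) ++ y = (x ++ u) ++ (v ++ y) by rewrite !catA.
  exact: pe_rel.
Qed.

Lemma pe_morph (T U : Type) (R : seq T -> Prop) (R' : seq U -> Prop)
  (f : letter T -> gword U) :
  (forall a, pres_eq R' (f a ++ f (inv_letter a)) [::]) ->
  (forall r, R r -> pres_eq R' (flatten (map f (pos_word r))) [::]) ->
  forall u v, pres_eq R u v ->
    pres_eq R' (flatten (map f u)) (flatten (map f v)).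
Proof.
move=> Hf Hr u v; elim=> {u v}.
- move=> w; exact: pe_refl.
- move=> u v _ H; exact: pe_sym.
- move=> u v w _ H1 _ H2; exact: pe_trans H1 H2.
- move=> u v a.
  rewrite !map_cat !flatten_cat /=.
  have := pe_ctx _ _ _ _ (flatten (map f u)) (flatten (map f v)) (Hf a).
  by rewrite /= cats0.
- move=> u v r Hr'.
  rewrite !map_cat !flatten_cat /=.
  exact: pe_ctx _ _ _ _ (flatten (map f u)) (flatten (map f v)) (Hr r Hr').
Qed.

Lemma inv_letterK (T : Type) (a : letter T) : inv_letter (inv_letter a) = a.
Proof. by case: a => x b; rewrite /inv_letter /= negbK. Qed.

Lemma inv_wordK (T : Type) (w : gword T) : inv_word (inv_word w) = w.
Proof.
by rewrite /inv_word map_rev revK -map_comp (eq_map (@inv_letterK T)) map_id.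
Qed.

Lemma inv_word_cons (T : Type) (c : letter T) (x : gword T) :
  inv_word (c :: x) = inv_word x ++ [:: inv_letter c].
Proof. by rewrite /inv_word /= rev_cons cats1. Qed.

Lemma pe_inv (T : Type) (R : seq T -> Prop) (x : gword T) :
  pres_eq R (x ++ inv_word x) [::].
Proof.
elim: x => [|c x IH]; first exact: pe_refl.
rewrite inv_word_cons.
have -> : (c :: x) ++ inv_word x ++ [:: inv_letter c] =
          [:: c] ++ (x ++ inv_word x) ++ [:: inv_letter c] by rewrite /= catA.
apply: pe_trans (pe_ctx _ _ _ _ ([:: c]) ([:: inv_letter c]) IH) _ => /=.
have := @pe_free T R [::] [::] c; by rewrite /=.
Qed.

Lemma pe_rel0 (T : Type) (R : seq T -> Prop) r : R r -> pres_eq R (pos_word r) [::].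
Proof. move=> Hr; have := @pe_rel T R [::] [::] r Hr; by rewrite /= cats0. Qed.

Variables (m C : nat).

Definition psi_letter (j : 'I_C) (l : letter ('I_C * 'I_m)) : gword 'I_m :=
  if l.1.1 == j then [:: (l.1.2, l.2)] else [::].
Definition psi_word j (w : gword ('I_C * 'I_m)) := flatten (map (psi_letter j) w).

Lemma psi_cons j l u : psi_word j (l :: u) = psi_letter j l ++ psi_word j u.
Proof. by []. Qed.

Lemma psi_notin j x b (s : seq 'I_C) : j \notin s ->
  psi_word j (map (fun k => ((k, x), b)) s) = [::].
Proof.
elim: s => [|k s IH] //=; rewrite inE negb_or => /andP [Hk Hs].
by rewrite psi_cons /psi_letter /= eq_sym (negbTE Hk) /= IH.
Qed.

Lemma psi_in j x b (s : seq 'I_C) : uniq s -> j \in s ->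
  psi_word j (map (fun k => ((k, x), b)) s) = [:: (x, b)].
Proof.
elim: s => [|k s IH] //= /andP [Hk Hu]; rewrite inE.
rewrite psi_cons /psi_letter /= => Hj; case: (eqVneq k j) => [Ekj|Hne].
  by rewrite psi_notin // -Ekj.
rewrite IH //; case/orP: Hj => // /eqP E; by rewrite E eqxx in Hne.
Qed.

Lemma psi_phi_letter j (a : letter 'I_m) : psi_word j (phi_letter C a) = [:: a].
Proof.
case: a => x b; rewrite /phi_letter /=.
case: b.
  rewrite /pos_word /A_word -map_comp.
  by rewrite (psi_in j x true _ (enum_uniq _) (mem_enum _ j)).
rewrite /inv_word /pos_word /A_word -!map_comp -map_rev.
rewrite (psi_in j x false) //; rewrite ?rev_uniq ?mem_rev ?enum_uniq ?mem_enum //.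
  by rewrite -enumT enum_uniq.
by rewrite -enumT mem_enum.
Qed.

Lemma psi_cat j u v : psi_word j (u ++ v) = psi_word j u ++ psi_word j v.
Proof. by rewrite /psi_word map_cat flatten_cat. Qed.

Lemma psi_relC j r : psi_word j (pos_word (relC C r)) = pos_word r.
Proof.
elim: r => [|x r IH] //.
have -> : relC C (x :: r) = A_word C x ++ relC C r by [].
rewrite /pos_word map_cat psi_cat -/(pos_word _) IH.
rewrite /pos_word /A_word -map_comp (psi_in j x true _ (enum_uniq _) (mem_enum _ j)).
by [].
Qed.

Lemma psi_phi j (w : gword 'I_m) : psi_word j (phi_word C w) = w.
Proof.
elim: w => [|a w IH] //.
have -> : phi_word C (a :: w) = phi_letter C a ++ phi_word C w by [].
by rewrite /psi_word map_cat flatten_cat -/(psi_word j _) -/(psi_word j _) psi_phi_letter IH.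
Qed.

Lemma size_psi j (u : gword ('I_C * 'I_m)) :
  size (psi_word j u) = count (fun l => l.1.1 == j) u.
Proof.
elim: u => [|l u IH] //=; rewrite size_cat -/(psi_word j u) IH /psi_letter.
by case: (l.1.1 == j).
Qed.

Lemma sum_count (u : gword ('I_C * 'I_m)) :
  \sum_(j < C) count (fun l => l.1.1 == j) u = size u.
Proof.
elim: u => [|l u IH] /=; first by rewrite big1.
rewrite big_split /= IH (bigD1 l.1.1) //= eqxx big1 // => j Hj.
by rewrite eq_sym (negbTE Hj).
Qed.

Lemma size_phi (w : gword 'I_m) : size (phi_word C w) = C * size w.
Proof.
elim: w => [|a w IH] /=; first by rewrite muln0.
rewrite size_cat -/(phi_word C w) IH mulnS; congr (_ + _).
rewrite /phi_letter; case: a.2;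
  by rewrite ?/inv_word ?size_rev !size_map -?enumT size_enum_ord.
Qed.

End Aux.

Theorem lemma3p4 (m C : nat) (S : pred (seq 'I_m))
  (hS0 : ~~ S [::]) (hC : 0 < C) :
  forall (w : gword 'I_m) (n : nat),
    word_length_is S w n ->
    word_length_is (@S_C C m S) (@phi_word C m w) (C * n).
Proof.
move=> w n [[w' [Hw' Hsz]] Hmin].
have phi_pe : forall u v, pres_eq S u v ->
    pres_eq (@S_C C m S) (phi_word C u) (phi_word C v).
  apply: pe_morph.
  - case=> x b; rewrite /phi_letter /=; case: b => /=.
      exact: pe_inv.
    have := pe_inv _ (@S_C C m S) (inv_word (pos_word (A_word C x))).
    by rewrite inv_wordK.
  - move=> r Hr.
    have -> : flatten (map (@phi_letter C m) (pos_word r)) = pos_word (relC C r).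
      by rewrite /relC /pos_word map_flatten -!map_comp.
    by apply: pe_rel0; exists r.
split.
  exists (phi_word C w'); split; first exact: phi_pe.
  by rewrite size_phi Hsz.
move=> u Hu.
have Hj : forall j : 'I_C, n <= count (fun l => l.1.1 == j) u.
  move=> j; rewrite -size_psi; apply: Hmin.
  rewrite -(@psi_phi m C j w).
  apply: (pe_morph _ _ _ _ (@psi_letter m C j)) Hu.
  - case=> [[k x] b]; rewrite /psi_letter /=; case: eqP => _ /=.
      have := @pe_free _ S [::] [::] (x, b); by rewrite /=.
    exact: pe_refl.
  - move=> r' [r Hr ->].
    have := @psi_relC m C j r; rewrite /psi_word => ->.
    exact: pe_rel0.
rewrite -(@sum_count m C u) -{1}(card_ord C) -sum1_card big_distrl /=.
by apply: leq_sum => j _; rewrite mul1n.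
Qed.
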